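(* Let $r\ge1$ and let $G$ be a perfect entangling matching on the vertex set $\{(a,c):1\le a\le p,\ 1\le c\le 2r\}$ such that $G$ is a vertex-disjoint union $G=\biguplus_{k=1}^r G_{j_kl_k}$, where $\{j_1,l_1,\dots,j_r,l_r\}=\{1,\dots,2r\}$ are distinct, $V(G_{j_kl_k})=\{(a,j_k):1\le a\le p\}\cup\{(a,l_k):1\le a\le p\}$, and $E(G_{j_kl_k})=\{\{(a,j_k),(i^{(k)}_a,l_k)\}:a=1,\dots,p\}$ with $i^{(k)}_a\ne a$ for all $a$ and $a\mapsto i^{(k)}_a$ a permutation of $\{1,\dots,p\}$. Then $\rho(G)$ is separable in $\mathbb{C}^p_A\otimes\mathbb{C}^{2r}_B$ and $\Delta(G)=\Delta(G^{\Gamma_B})$.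
   Context: A perfect matching is a simple graph in which every vertex lies in exactly one edge; an edge $\{(i,j),(i',j')\}$ is entangled if $i\ne i'$ and $j\ne j'$; a perfect entangling matching is a perfect matching all of whose edges are entangled. For a simple graph: $\Delta(G)$ is the diagonal degree matrix, $M(G)$ the adjacency matrix, $L(G)=\Delta(G)-M(G)$, $\rho(G)=\frac{1}{2|E|}L(G)$. Vertex $(a,c)$ is identified with $|a\rangle\otimes|c\rangle$ in the standard bases of $\mathbb{C}^p_A$ and $\mathbb{C}^{2r}_B$. The partial transpose $G^{\Gamma_B}$ has the same vertex set, and $\{(i,j),(k,l)\}$ is an edge of $G^{\Gamma_B}$ iff $\{(i,l),(k,j)\}$ is an edge of $G$. Separable means a convex combination of product states. *)

(* Defs.v *)
From HB Require Import structures.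
From mathcomp Require Import all_boot all_order all_algebra all_fingroup.
Set Implicit Arguments. Unset Strict Implicit. Unset Printing Implicit Defensive.
Import Order.TTheory GRing.Theory Num.Theory.
Local Open Scope ring_scope.

Definition vtx (p n : nat) := ('I_p * 'I_n)%type.

Definition simple_graph (p n : nat) (e : rel (vtx p n)) : Prop :=
  (forall x y, e x y = e y x) /\ (forall x, ~~ e x x).

Definition perfect_matching (p n : nat) (e : rel (vtx p n)) : Prop :=
  simple_graph e /\ forall x, #|[set y | e x y]| = 1%N.

Definition entangled_edge (p n : nat) (x y : vtx p n) : bool :=
  (x.1 != y.1) && (x.2 != y.2).

Definition perfect_entangling_matching (p n : nat) (e : rel (vtx p n)) : Prop :=
  perfect_matching e /\ forall x y, e x y -> entangled_edge x y.

Definition ptransB (p n : nat) (e : rel (vtx p n)) : rel (vtx p n) :=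
  fun x y => e (x.1, y.2) (y.1, x.2).

Definition degree (p n : nat) (e : rel (vtx p n)) (x : vtx p n) : nat :=
  #|[set y | e x y]|.

Definition nedges (p n : nat) (e : rel (vtx p n)) : nat :=
  (#|[set u : vtx p n * vtx p n | e u.1 u.2]| %/ 2)%N.

(* The vertex (a,c) is identified with |a> (x) |c>, i.e. with the index
   mxvec_index a c = a * n + c of 'I_(p * n). *)
Definition vof (p n : nat) (k : 'I_(p * n)) : vtx p n :=
  enum_val (cast_ord (esym (mxvec_cast p n)) k).

Section Mats.
Variable C : numClosedFieldType.

Definition kron (p n : nat) (A : 'M[C]_p) (B : 'M[C]_n) : 'M[C]_(p * n) :=
  \matrix_(i, j) (A (vof i).1 (vof j).1 * B (vof i).2 (vof j).2).

Definition degmx (p n : nat) (e : rel (vtx p n)) : 'M[C]_(p * n) :=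
  \matrix_(i, j) (if i == j then (degree e (vof i))%:R else 0).

Definition adjmx (p n : nat) (e : rel (vtx p n)) : 'M[C]_(p * n) :=
  \matrix_(i, j) (e (vof i) (vof j))%:R.

Definition laplacian (p n : nat) (e : rel (vtx p n)) : 'M[C]_(p * n) :=
  degmx e - adjmx e.

Definition rho_graph (p n : nat) (e : rel (vtx p n)) : 'M[C]_(p * n) :=
  ((2 * nedges e)%:R)^-1 *: laplacian e.

Definition adjointmx (m n : nat) (A : 'M[C]_(m, n)) : 'M[C]_(n, m) :=
  (map_mx Num.conj A)^T.

Definition hermitian (n : nat) (A : 'M[C]_n) : Prop := adjointmx A = A.

Definition psd (n : nat) (A : 'M[C]_n) : Prop :=
  hermitian A /\ forall v : 'cV[C]_n, 0 <= (adjointmx v *m A *m v) 0 0.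

Definition density (n : nat) (A : 'M[C]_n) : Prop := psd A /\ \tr A = 1.

Definition separable (p n : nat) (rho : 'M[C]_(p * n)) : Prop :=
  exists (k : nat) (lam : 'I_k -> C) (rA : 'I_k -> 'M[C]_p) (rB : 'I_k -> 'M[C]_n),
    [/\ forall i, 0 <= lam i,
        \sum_(i < k) lam i = 1,
        forall i, density (rA i) /\ density (rB i)
      & rho = \sum_(i < k) lam i *: kron (rA i) (rB i)].
End Mats.

(* Main.v *)
Require Import Defs.
From mathcomp Require Import all_boot all_order all_algebra all_fingroup all_solvable.
From mathcomp Require separable cyclotomic.
From mathcomp Require Import ring.
Set Implicit Arguments. Unset Strict Implicit. Unset Printing Implicit Defensive.
Import Order.TTheory GRing.Theory Num.Theory.
Local Open Scope ring_scope.


Lemma prim_root_exists (C : numClosedFieldType) n :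
  (n > 0)%N -> {z : C | n.-primitive_root z}.
Proof.
pose p : {poly C} := 'X^n - 1; have [r Dp] := closed_field_poly_normal p.
move=> n_gt0; apply/sigW; rewrite (monicP _) ?monicXnsubC // scale1r in Dp.
have rn1: all n.-unity_root r by apply/allP=> z; rewrite -root_prod_XsubC -Dp.
have sz_r: (n < (size r).+1)%N.
  by rewrite -(size_prod_XsubC r id) -Dp size_XnsubC.
have [|z] := hasP (has_prim_root n_gt0 rn1 _ sz_r); last by exists z.
by rewrite -separable.separable_prod_XsubC -Dp cyclotomic.separable_Xn_sub_1 // pnatr_eq0 -lt0n.
Qed.

Section Root.
Variables (C : numClosedFieldType) (N : nat) (z : C).
Hypothesis Npos : (0 < N)%N.
Hypothesis zP : N.-primitive_root z.

Lemma zN : z ^+ N = 1.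
Proof. exact: prim_expr_order. Qed.

Lemma z_neq0 : z != 0.
Proof. by rewrite (prim_root_eq0 zP) -lt0n. Qed.

Lemma conj_z : z^* = z^-1.
Proof.
have h1 : `|z| = 1.
  apply/eqP; rewrite -(pexpr_eq1 Npos) ?normr_ge0 //.
  by rewrite -normrX zN normr1.
have : z * z^* = 1 by rewrite -normCK h1 expr1n.
by move=> h; rewrite -[z^*]mul1r -(mulVf z_neq0) -mulrA h mulr1.
Qed.

Lemma zt_conj (t : nat) : z ^+ t * (z ^+ t)^* = 1.
Proof. rewrite rmorphXn /= conj_z -exprMn mulfV ?expr1n //; exact: z_neq0. Qed.

Lemma orth (s s' : 'I_N) :
  \sum_(t < N) z ^+ (t * s) * (z ^+ (t * s'))^* = (s == s')%:R *+ N.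
Proof.
pose w := z ^+ s * (z^-1) ^+ s'.
have -> : \sum_(t < N) z ^+ (t * s) * (z ^+ (t * s'))^* = \sum_(t < N) w ^+ t.
  apply: eq_bigr => t _; rewrite rmorphXn /= conj_z /w exprMn -!exprM.
  by rewrite !(mulnC t).
have wN : w ^+ N = 1.
  by rewrite /w exprMn -!exprM !(mulnC _ N) !exprM zN exprVn zN invr1 !expr1n mulr1.
have [eqs|ne] := eqVneq s s'.
  rewrite /w eqs exprVn mulfV ?expf_neq0 ?z_neq0 //.
  by rewrite (eq_bigr (fun _ => 1)) ?sumr_const ?card_ord // => t _; rewrite expr1n.
have w1 : w - 1 != 0.
  rewrite subr_eq0 /w exprVn; apply/negP => /eqP h.
  have : z ^+ s == z ^+ s'.
    by rewrite -[z ^+ s]mulr1 -(mulVf (expf_neq0 s' z_neq0)) mulrA h mul1r.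
  rewrite (eq_prim_root_expr zP) !modn_small // => hs; by move: ne; rewrite -(inj_eq val_inj) /= hs.

have := subrX1 w N; rewrite wN subrr => /esym /eqP.
move=> h; rewrite mulf_eq0 (negPf w1) /= in h; by rewrite (eqP h) mul0rn.
Qed.
End Root.


Lemma sum_perm_ind (C : numClosedFieldType) p (pi : {perm 'I_p}) (a : 'I_p) (F : 'I_p -> C) :
  \sum_a0 ((pi a0 == a)%:R * F a0) = F (pi^-1 a)%g.
Proof.
rewrite (bigD1 (pi^-1 a)%g) //= permKV eqxx mul1r big1 ?addr0 // => a0 ne.
have -> : (pi a0 == a) = false.
  apply/negP => /eqP h; move/eqP: ne; apply; by rewrite -h permK.
by rewrite mul0r.
Qed.

Section Vec.
Variables (C : numClosedFieldType) (N : nat) (z : C).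
Hypothesis Npos : (0 < N)%N.
Hypothesis zP : N.-primitive_root z.
Variables (p : nat) (sg : {perm 'I_p}).
Hypothesis sgN : (sg ^+ N = 1)%g.

Definition xv (a0 : 'I_p) (t : 'I_N) (a : 'I_p) : C :=
  \sum_(s < N) z ^+ (t * s) * (((sg ^+ s)%g a0 == a)%:R).

Lemma xvS a0 t a : xv a0 t (sg a) = z ^+ t * xv a0 t a.
Proof.
rewrite /xv mulr_sumr (reindex_inj (@ordS_inj N)) /=.
apply: eq_bigr => s _ /=.
have ztN : (z ^+ t) ^+ N = 1 by rewrite -exprM mulnC exprM (zN zP) expr1n.
rewrite exprM (expr_mod _ ztN) expg_mod // expgSr permM (inj_eq perm_inj).
by rewrite exprS -exprM mulrA.
Qed.

Lemma claim1 a b :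
  \sum_a0 \sum_(t < N) xv a0 t a * (xv a0 t b)^* = (a == b)%:R *+ (N * N).
Proof.
transitivity (\sum_a0 \sum_(s < N)
   ((((sg ^+ s)%g a0 == a)%:R * (((sg ^+ s)%g a0 == b)%:R)) *+ N : C)).
  apply: eq_bigr => a0 _.
  transitivity (\sum_(t < N) \sum_(s < N) \sum_(s' < N)
     ((z ^+ (t * s) * (z ^+ (t * s'))^*) *
      ((((sg ^+ s)%g a0 == a)%:R * (((sg ^+ s')%g a0 == b)%:R)) : C))).
    apply: eq_bigr => t _; rewrite /xv rmorph_sum mulr_suml.
    apply: eq_bigr => s _; rewrite mulr_sumr; apply: eq_bigr => s' _.
    rewrite rmorphM /= conjC_nat; ring.
  rewrite exchange_big /=; apply: eq_bigr => s _.
  rewrite exchange_big /=.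
  under eq_bigr => s' _ do rewrite -mulr_suml (orth Npos zP).
  rewrite (bigD1 s) //= eqxx big1 ?addr0; first by rewrite mulr_natl mulrnAl mul1r.
  move=> s' ne; rewrite eq_sym (negPf ne) /= mul0rn mul0r.
  by [].
rewrite exchange_big /=.
under eq_bigr => s _ do rewrite sumrMnl (sum_perm_ind (sg ^+ s)%g a
     (fun a0 => (((sg ^+ s)%g a0 == b)%:R : C))) permKV.
by rewrite sumr_const card_ord -mulrnA.
Qed.
End Vec.

Section Vec2.
Variables (C : numClosedFieldType) (N : nat) (z : C).
Hypothesis Npos : (0 < N)%N.
Hypothesis zP : N.-primitive_root z.
Variables (p : nat) (sg : {perm 'I_p}).
Hypothesis sgN : (sg ^+ N = 1)%g.

Lemma claim2 a b :
  \sum_a0 \sum_(t < N) z ^+ t * xv z sg a0 t a * (xv z sg a0 t b)^* = (sg a == b)%:R *+ (N * N).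
Proof.
rewrite -(claim1 Npos zP sg); apply: eq_bigr => a0 _; apply: eq_bigr => t _.
by rewrite (xvS zP sgN).
Qed.

Lemma claim3 a b :
  \sum_a0 \sum_(t < N) (z ^+ t)^* * xv z sg a0 t a * (xv z sg a0 t b)^* = (a == sg b)%:R *+ (N * N).
Proof.
have := congr1 Num.conj_op (claim2 b a).
rewrite rmorphMn /= conjC_nat eq_sym => <-.
rewrite rmorph_sum; apply: eq_bigr => a0 _; rewrite rmorph_sum; apply: eq_bigr => t _.
by rewrite !rmorphM /= conjCK mulrAC.
Qed.
End Vec2.


Section Sep.
Variable C : numClosedFieldType.

Definition rk1 m (x : 'I_m -> C) : 'M[C]_m := \matrix_(u, v) (x u * (x v)^*).
Definition nrm2 m (x : 'I_m -> C) : C := \sum_u x u * (x u)^*.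

Lemma nrm2_ge0 m (x : 'I_m -> C) : 0 <= nrm2 x.
Proof. by apply: sumr_ge0 => u _; rewrite mul_conjC_ge0. Qed.

Lemma nrm2_eq0 m (x : 'I_m -> C) : nrm2 x = 0 -> forall u, x u = 0.
Proof.
move=> h u; apply/eqP; rewrite -mul_conjC_eq0; apply/eqP.
by move: h => /psumr_eq0P -> // v _; rewrite mul_conjC_ge0.
Qed.

Lemma psd_rk1 m (s : C) (x : 'I_m -> C) : 0 <= s -> psd (s *: rk1 x).
Proof.
move=> s0; have sr : s^* = s by rewrite conj_Creal // ger0_real.
split.
  apply/matrixP => u v; rewrite !mxE !rmorphM /= conjCK sr; ring.
move=> w.
pose y := \sum_u (w u 0)^* * x u.
have -> : (adjointmx w *m (s *: rk1 x) *m w) 0 0 = s * (y * y^*).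
  transitivity (\sum_v \sum_u s * (((w u 0)^* * x u) * ((w v 0)^* * x v)^*)).
    rewrite !mxE; apply: eq_bigr => v _; rewrite !mxE mulr_suml; apply: eq_bigr => u _.
    rewrite !mxE !rmorphM /= conjCK; ring.
  rewrite /y rmorph_sum mulr_sumr mulr_sumr; apply: eq_bigr => v _.
  by rewrite mulr_suml mulr_sumr; apply: eq_bigr => u _.
by rewrite mulr_ge0 // mul_conjC_ge0.
Qed.

Lemma tr_rk1 m (s : C) (x : 'I_m -> C) : \tr (s *: rk1 x) = s * nrm2 x.
Proof.
rewrite /mxtrace /nrm2 mulr_sumr; apply: eq_bigr => u _; by rewrite !mxE.
Qed.

Definition delt m (u0 : 'I_m) : 'I_m -> C := fun u => (u == u0)%:R.

Lemma nrm2_delt m (u0 : 'I_m) : nrm2 (delt u0) = 1.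
Proof.
rewrite /nrm2 (bigD1 u0) //= big1 ?addr0 /delt ?eqxx ?conjC1 ?mulr1 // => u ne.
by rewrite (negPf ne) mul0r.
Qed.

Definition dens m (u0 : 'I_m) (x : 'I_m -> C) : 'M[C]_m :=
  if nrm2 x == 0 then 1 *: rk1 (delt u0) else (nrm2 x)^-1 *: rk1 x.

Lemma dens_density m (u0 : 'I_m) x : density (dens u0 x).
Proof.
rewrite /dens; case: eqP => h.
  by split; [apply: psd_rk1 | rewrite tr_rk1 nrm2_delt mulr1].
split; first by apply: psd_rk1; rewrite invr_ge0 nrm2_ge0.
by rewrite tr_rk1 mulVf //; apply/eqP.
Qed.

Lemma sep_rank1 p n (I : finType) (c : I -> C) (xs : I -> 'I_p -> C)
  (ys : I -> 'I_n -> C) (u0 : 'I_p) (w0 : 'I_n) (rho : 'M[C]_(p * n)) :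
  (forall i, 0 <= c i) ->
  \sum_i c i * nrm2 (xs i) * nrm2 (ys i) = 1 ->
  (forall k l, rho k l = \sum_i c i * (xs i (vof k).1 * (xs i (vof l).1)^*)
                                    * (ys i (vof k).2 * (ys i (vof l).2)^*)) ->
  separable rho.
Proof.
move=> c0 csum hrho.
exists #|I|, (fun j => c (enum_val j) * nrm2 (xs (enum_val j)) * nrm2 (ys (enum_val j))),
  (fun j => dens u0 (xs (enum_val j))), (fun j => dens w0 (ys (enum_val j))).
split.
- by move=> j; rewrite !mulr_ge0 ?nrm2_ge0.
- by rewrite -csum (big_enum_val (fun i => c i * nrm2 (xs i) * nrm2 (ys i))).
- by move=> j; split; apply: dens_density.
apply/matrixP => k l; rewrite hrho summxE.
rewrite (big_enum_val (fun i => c i * (xs i (vof k).1 * (xs i (vof l).1)^*)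
                                    * (ys i (vof k).2 * (ys i (vof l).2)^*))).
apply: eq_bigr => j _; set i := enum_val j.
rewrite !mxE /dens.
case: eqP => hx.
  by rewrite (nrm2_eq0 hx (vof k).1) hx !(mulr0, mul0r).
case: eqP => hy.
  by rewrite (nrm2_eq0 hy (vof k).2) hy !(mulr0, mul0r).
rewrite !mxE.
have hx' : nrm2 (xs i) != 0 by apply/eqP.
have hy' : nrm2 (ys i) != 0 by apply/eqP.
field.
by rewrite hx' hy'.
Qed.
End Sep.


Lemma perm_eq_inv p (s : {perm 'I_p}) (a y : 'I_p) : (a == s y) = (y == (s^-1)%g a).
Proof. by rewrite -(inj_eq (@perm_inj _ (s^-1)%g)) permK eq_sym. Qed.

Section Graph.
Variables (p r : nat) (e : rel (vtx p (2 * r)))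
    (jj ll : 'I_r -> 'I_(2 * r)) (sigma : 'I_r -> {perm 'I_p}).
Hypothesis hjj : injective jj.
Hypothesis hll : injective ll.
Hypothesis hdis : forall k k', jj k != ll k'.
Hypothesis he : forall x y, e x y <->
       exists k a, (x = (a, jj k) /\ y = (sigma k a, ll k)) \/
                   (y = (a, jj k) /\ x = (sigma k a, ll k)).

Lemma eJ k a b d : e (a, jj k) (b, d) = (d == ll k) && (b == sigma k a).
Proof.
apply/idP/idP.
  move/he => [k' [a' [[h1 h2]|[h1 h2]]]].
    case: h1 => ha /hjj hk; subst; case: h2 => -> ->; by rewrite !eqxx.
  case: h2 => _ /eqP h; by rewrite (negPf (hdis _ _)) in h.
move/andP => [/eqP -> /eqP ->]; apply/he; exists k, a; by left.
Qed.

Lemma eL k a b d : e (a, ll k) (b, d) = (d == jj k) && (a == sigma k b).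
Proof.
apply/idP/idP.
  move/he => [k' [a' [[h1 h2]|[h1 h2]]]].
    case: h1 => _ /eqP h; by rewrite eq_sym (negPf (hdis _ _)) in h.
  case: h2 => hb /hll hk; subst; case: h1 => -> ->; by rewrite !eqxx.
move/andP => [/eqP -> /eqP ->]; apply/he; exists k, b; by right.
Qed.

Hypothesis hsym : forall x y, e x y = e y x.
Hypothesis hcov : forall c : 'I_(2 * r), exists k, c = jj k \/ c = ll k.

Lemma deg_pt x : degree (ptransB e) x = 1%N.
Proof.
case: x => a c; have [k [->| ->]] := hcov c.
  rewrite /degree (_ : [set y | ptransB e (a, jj k) y] = [set ((sigma k)^-1 a, ll k)]%g).
    by rewrite cards1.
  apply/setP => [[y1 y2]]; rewrite !inE /ptransB /= hsym eJ xpair_eqE.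
  by rewrite perm_eq_inv andbC.
rewrite /degree (_ : [set y | ptransB e (a, ll k) y] = [set (sigma k a, jj k)]%g).
  by rewrite cards1.
apply/setP => [[y1 y2]]; rewrite !inE /ptransB /= hsym eL xpair_eqE.
by rewrite andbC.
Qed.
End Graph.

Section Core.
Variables (C : numClosedFieldType) (N : nat) (z : C).
Hypothesis Npos : (0 < N)%N.
Hypothesis zP : N.-primitive_root z.
Variables (p r : nat) (e : rel (vtx p (2 * r)))
    (jj ll : 'I_r -> 'I_(2 * r)) (sigma : 'I_r -> {perm 'I_p}).
Hypothesis hjj : injective jj.
Hypothesis hll : injective ll.
Hypothesis hdis : forall k k', jj k != ll k'.
Hypothesis he : forall x y, e x y <->
       exists k a, (x = (a, jj k) /\ y = (sigma k a, ll k)) \/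
                   (y = (a, jj k) /\ x = (sigma k a, ll k)).
Hypothesis hcov : forall c : 'I_(2 * r), exists k, c = jj k \/ c = ll k.
Hypothesis sgN : forall k, (sigma k ^+ N = 1)%g.

Definition yv (k : 'I_r) (t : 'I_N) (c : 'I_(2 * r)) : C :=
  (c == jj k)%:R - (z ^+ t)^* * (c == ll k)%:R.

Lemma yv_conj k t d : (yv k t d)^* = (d == jj k)%:R - z ^+ t * (d == ll k)%:R.
Proof. by rewrite /yv rmorphB rmorphM /= !conjC_nat conjCK. Qed.

Lemma core a b c d :
  \sum_(k < r) \sum_a0 \sum_(t < N)
     (xv z (sigma k) a0 t a * (xv z (sigma k) a0 t b)^*) * (yv k t c * (yv k t d)^*)
  = ((((a, c) == (b, d)) : bool)%:R - (e (a, c) (b, d))%:R) *+ (N * N).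
Proof.
have [k0 hc] := hcov c.
rewrite (bigD1 k0) //=; rewrite [X in _ + X = _]big1 ?addr0; last first.
  move=> k ne; apply: big1 => a0 _; apply: big1 => t _.
  have -> : yv k t c = 0.
    rewrite /yv; case: hc => ->.
      by rewrite (inj_eq hjj) eq_sym (negPf ne) (negPf (hdis _ _)) mulr0 subr0.
    by rewrite eq_sym (negPf (hdis _ _)) (inj_eq hll) eq_sym (negPf ne) mulr0 subr0.
  by rewrite !mul0r mulr0.
case: hc => ->.
  transitivity ((d == jj k0)%:R * (\sum_a0 \sum_(t < N) xv z (sigma k0) a0 t a * (xv z (sigma k0) a0 t b)^*)
    - (d == ll k0)%:R * (\sum_a0 \sum_(t < N) z ^+ t * xv z (sigma k0) a0 t a * (xv z (sigma k0) a0 t b)^*)).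
    rewrite !mulr_sumr -sumrB; apply: eq_bigr => a0 _.
    rewrite !mulr_sumr -sumrB; apply: eq_bigr => t _.
    rewrite yv_conj /yv eqxx (negPf (hdis _ _)) mulr0 subr0; rewrite mulr1n mul1r; move: (xv _ _ _ _ a) ((xv _ _ _ _ b)^*) ((d == jj k0)%:R) ((d == ll k0)%:R) => X Y D1 D2; ring.
  rewrite (claim1 Npos zP) (claim2 Npos zP (sgN k0)) (eJ hjj hdis he) xpair_eqE.
  rewrite (eq_sym b) (eq_sym (jj k0)).
  case: (d == jj k0); case: (d == ll k0); case: (a == b); case: (sigma k0 a == b);
   rewrite /=; ring.
transitivity ((d == ll k0)%:R * (\sum_a0 \sum_(t < N) xv z (sigma k0) a0 t a * (xv z (sigma k0) a0 t b)^*)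
  - (d == jj k0)%:R * (\sum_a0 \sum_(t < N) (z ^+ t)^* * xv z (sigma k0) a0 t a * (xv z (sigma k0) a0 t b)^*)).
  rewrite !mulr_sumr -sumrB; apply: eq_bigr => a0 _.
  rewrite !mulr_sumr -sumrB; apply: eq_bigr => t _.
  rewrite yv_conj /yv eqxx (eq_sym (ll k0)) (negPf (hdis _ _)) /= mulr1n mulr0n mulr1 sub0r.
  have h := zt_conj Npos zP t.
  apply/eqP; rewrite -subr_eq0; apply/eqP.
  set w := z ^+ t.
  transitivity ((d == ll k0)%:R * xv z (sigma k0) a0 t a * (xv z (sigma k0) a0 t b)^* * (w * w^* - 1)).
    ring.
  by rewrite h subrr mulr0.
rewrite (claim1 Npos zP) (claim3 Npos zP (sgN k0)) (eL hll hdis he) xpair_eqE.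
rewrite (eq_sym (ll k0)).
case: (d == jj k0); case: (d == ll k0); case: (a == b); case: (a == sigma k0 b);
 rewrite /=; ring.
Qed.
End Core.


Lemma sum3 (C : numClosedFieldType) (I J K : finType) (F : I * (J * K) -> C) :
  \sum_i F i = \sum_a \sum_b \sum_c F (a, (b, c)).
Proof.
rewrite [RHS](eq_bigr (fun a => \sum_q F (a, q))) => [|a _]; last first.
  by rewrite pair_bigA; apply: eq_bigr => -[b c].
by rewrite pair_bigA; apply: eq_bigr => -[a q].
Qed.

Lemma sum_ind (C : numClosedFieldType) (T : finType) (x : T) :
  \sum_(c : T) ((c == x)%:R : C) = 1.
Proof.
rewrite (bigD1 x) //= eqxx big1 ?addr0 // => c ne; by rewrite (negPf ne).
Qed.

Lemma vof_inj p n : injective (@vof p n).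
Proof. move=> i j; rewrite /vof => /enum_val_inj; exact: cast_ord_inj. Qed.

Lemma nedges_pm p n (e : rel (vtx p n)) :
  (forall x, #|[set y | e x y]| = 1%N) -> #|[set u : vtx p n * vtx p n | e u.1 u.2]| = (p * n)%N.
Proof.
move=> hdeg.
transitivity (\sum_(u | xpredT u.1 && e u.1 u.2) 1)%N.
  by rewrite -sum1_card; apply: eq_bigl => u; rewrite !inE.
rewrite -(pair_big_dep xpredT (fun x y => e x y) (fun _ _ => 1%N)).
transitivity (\sum_(x : vtx p n) 1)%N.
  by apply: eq_bigr => x _; rewrite sum1dep_card hdeg.
by rewrite sum1_card card_prod !card_ord.
Qed.

Lemma nrm2_yv (C : numClosedFieldType) (N : nat) (z : C) (Npos : (0 < N)%N)
  (zP : N.-primitive_root z) r (jj ll : 'I_r -> 'I_(2 * r))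
  (hdis : forall k k', jj k != ll k') k (t : 'I_N) :
  nrm2 (yv z jj ll k t) = 2.
Proof.
have h := zt_conj Npos zP t.
rewrite /nrm2.
transitivity (\sum_c (((c == jj k)%:R : C) + (c == ll k)%:R)).
  apply: eq_bigr => c _; rewrite yv_conj /yv.
  have [hc|ne1] := eqVneq c (jj k).
    by subst c; rewrite (negPf (hdis _ _)) /= ?mulr1n ?mulr0n !mulr0 !subr0 mulr1 addr0.
  have [hc|ne2] := eqVneq c (ll k).
    subst c; rewrite /= ?mulr1n ?mulr0n !mulr1 !sub0r add0r mulrNN mulrC; exact: h.
  by rewrite /= ?mulr1n ?mulr0n !mulr0 !subr0 mulr0 addr0.
by rewrite big_split /= !sum_ind.
Qed.

Unset Implicit Arguments.
Theorem mainTheorem9 (C : numClosedFieldType) (p r : nat) (hp : (0 < p)%N) (hr : (0 < r)%N)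
    (e : rel (vtx p (2 * r)))
    (jj ll : 'I_r -> 'I_(2 * r)) (sigma : 'I_r -> {perm 'I_p}) :
    perfect_entangling_matching e ->
    (* j_1, l_1, ..., j_r, l_r are distinct and exhaust {1, ..., 2r} *)
    injective jj -> injective ll -> (forall k k', jj k != ll k') ->
    (forall c : 'I_(2 * r), exists k, c = jj k \/ c = ll k) ->
    (* each i^(k) is a fixed-point-free permutation *)
    (forall k a, sigma k a != a) ->
    (* G is the union of the G_{j_k l_k} *)
    (forall x y, e x y <->
       exists k a, (x = (a, jj k) /\ y = (sigma k a, ll k)) \/
                   (y = (a, jj k) /\ x = (sigma k a, ll k))) ->
    separable (rho_graph C e) /\ degmx C e = degmx C (ptransB e).
Proof.
move=> [[[hsym hirr] hdeg] hent] hjj hll hdis hcov hfix he.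
have degpt := deg_pt hjj hll hdis he hsym hcov.
split; last first.
  apply/matrixP => i j; rewrite !mxE; case: (i == j) => //.
  by rewrite degpt /degree hdeg.
pose N := #|{perm 'I_p}|.
have Npos : (0 < N)%N by apply/card_gt0P; exists 1%g.
have sgN k : (sigma k ^+ N = 1)%g.
  by rewrite /N -cardsT expg_cardG ?inE.
have [z zP] := prim_root_exists C Npos.
have nE : nedges e = (p * r)%N.
  rewrite /nedges nedges_pm // mulnCA mulKn //.
pose K : C := ((2 * nedges e)%:R)^-1 * ((N * N)%:R)^-1.
have n0 : (0 < 2 * r)%N by rewrite muln_gt0.
have hD : ((2 * nedges e)%:R : C) != 0 by rewrite pnatr_eq0 nE !muln_eq0 !negb_or -!lt0n hp hr.
have hN : ((N * N)%:R : C) != 0 by rewrite pnatr_eq0 muln_eq0 !negb_or -!lt0n Npos.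
apply: (@sep_rank1 C p (2 * r) ('I_r * ('I_p * 'I_N))%type (fun _ => K)
   (fun i => xv z (sigma i.1) i.2.1 i.2.2) (fun i => yv z jj ll i.1 i.2.2)
   (Ordinal hp) (Ordinal n0)).
- by move=> _; rewrite mulr_ge0 // invr_ge0 ler0n.
- rewrite sum3.
  transitivity (K * 2%:R * \sum_(k < r) \sum_(a : 'I_p) \sum_a0 \sum_(t < N)
        xv z (sigma k) a0 t a * (xv z (sigma k) a0 t a)^*).
    rewrite mulr_sumr; apply: eq_bigr => k _ /=.
    have ex3 : forall (F : 'I_p -> 'I_p -> 'I_N -> C),
      \sum_a \sum_a0 \sum_(t < N) F a a0 t = \sum_a0 \sum_(t < N) \sum_a F a a0 t.
      by move=> F; rewrite exchange_big; apply: eq_bigr => a0 _; rewrite exchange_big.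
    rewrite ex3 mulr_sumr; apply: eq_bigr => a0 _; rewrite mulr_sumr; apply: eq_bigr => t _.
    rewrite (nrm2_yv Npos zP hdis) /nrm2; ring.
  under eq_bigr => k _ do under eq_bigr => a _ do rewrite (claim1 Npos zP) eqxx.
  rewrite sumr_const card_ord sumr_const card_ord /K nE.
  rewrite -!mulrnA -mulr_natr.
  rewrite /= !mul1n !natrM; field.
  by rewrite !pnatr_eq0 -!lt0n Npos hp hr.
move=> k l.
rewrite /rho_graph /laplacian !mxE -(inj_eq (@vof_inj p (2 * r))) sum3.
transitivity (K * \sum_(k' < r) \sum_a0 \sum_(t < N)
   (xv z (sigma k') a0 t (vof k).1 * (xv z (sigma k') a0 t (vof l).1)^*) *
   (yv z jj ll k' t (vof k).2 * (yv z jj ll k' t (vof l).2)^*)); last first.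
  rewrite mulr_sumr; apply: eq_bigr => k' _; rewrite mulr_sumr; apply: eq_bigr => a0 _.
  rewrite mulr_sumr; apply: eq_bigr => t _ /=; by rewrite mulrA.
case: (vof k) => a c; case: (vof l) => b d /=.
rewrite (core Npos zP hjj hll hdis he hcov sgN) /degree hdeg /K.
case: ((a, c) == (b, d)); rewrite /= -(mulr_natr (_ - _) (N * N)); move: hD hN (e (a, c) (b, d))%:R; move: ((2 * nedges e)%:R : C) ((N * N)%:R : C) => D M hD hN E; field; by rewrite hD hN.
Qed.
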